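(* Consider a time series with baseline variables $X$ whose index sets satisfy $\{N,M,C\}\subseteq V$ (outcome process $N$, mediator process $M$, covariate process $C$; $V$ may contain further, e.g. unobserved, processes) and $\{A^D,A^M\}\subseteq W$ (treatment components, baseline). Suppose that for every $t\ge 1$ there is a DAG $D_t$ on the node set $V^t\cup W^t$ such that the $d$-separation Markov property holds in $D_t$ for the distribution of $X$ (the interventional distribution under $do(A^D=a,A^M=a^* )$), and such that the only contemporaneous edges of $D_t$ are of the form $\nu_s^N\to\nu_s^M$ and $\nu_s^N\to\nu_s^C$. Let $D$ be the tailed directed graph on $V\cup W$ containing $i\to j$ (resp. $i\bullet\!\!\to j$) if and only if this edge is in the rolled version of $D_t$ for some $t$. Then, for every lag $k\ge 1$: (i) if $M$ is $\delta$-separated from $A^D$ given $\{A^M,C,N\}$ in $D$, then $A^D$ and $X_k^M$ are conditionally independent given $(A^M,\overline X^M_{k-1},\overline X^C_{k-1},\overline X^N_k)$; (ii) if $C$ is $\delta$-separated from $A^M$ given $\{A^D,M,N\}$ in $D$, then $A^M$ and $X_k^C$ are conditionally independent given $(A^D,\overline X^M_{k},\overline X^C_{k-1},\overline X^N_k)$; (iii) if $N$ is $\delta$-separated from $A^M$ given $\{A^D,C,M\}$ in $D$, then $A^M$ and $X_k^N$ are conditionally independent given $(A^D,\overline X^M_{k-1},\overline X^C_{k-1},\overline X^N_{k-1})$.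
   Context: Time series with baseline variables: $V$, $W$ finite disjoint index sets; $X_0$ is a random vector indexed by $V\cup W$, $X_t$ ($t\ge1$) indexed by $V$. $X_t^A$ is the subvector indexed by $A$, $\overline X_t^A=\{X_s^i:i\in A,s\le t\}$; baseline variables are written simply as $A^D$, $A^M$. In the survival application $X_k^N$ is the indicator of $T>t_k$, and $X^M_k,X^C_k$ are mediator and covariate measurements at time $t_k$. Unrolled node set: $V^t=\bigcup_{i\in V}\{\nu_0^i,\dots,\nu_t^i\}$, $W^t=\{\nu_0^i:i\in W\}$; node $\nu_s^i$ represents $X_s^i$. An edge $\nu_s^i\to\nu_u^j$ is contemporaneous if $s=u$. The $d$-separation Markov property holds in $D_t$ if $d$-separation of node sets $a,b$ by $c$ implies conditional independence of the corresponding variables given those of $c$. Rolled version of a DAG $D_t$: the tailed directed graph with $i\ast\!\!\to j$ if $\nu_s^i\to\nu_u^j$ for some $s\le u$ and $i\bullet\!\!\to j$ iff $\nu_u^i\to\nu_u^j$ for some $u$ (here $i\ast\!\!\to j$ means $i\to j$ or $i\bullet\!\!\to j$, and $i\to j$ is omitted when $i\bullet\!\!\to j$ is present). Standing assumption: whenever $\nu_u^i\to\nu_u^j$ is present, so is $\nu_s^i\to\nu_r^j$ for some $s<r$. $\delta$-separation: for a tailed directed graph $D$ let $D^-$ be the DG with $i\to j$ iff $i\ast\!\!\to j$ in $D$, and $(D^-)^B$ the DG obtained by deleting all edges $i\to j$ with $i\in B$. $B$ is $\delta$-separated from $A$ given $C$ in $D$ if every path (walk without repeated nodes) in $(D^-)^B$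 between $A$ and $B$ contains a noncollider in $C$ or a collider (non-endpoint node with both adjacent edges pointing into it) not in $\mathrm{an}(C)\cup C$, ancestors taken in $D^-$. *)

(* Defs.v *)
From HB Require Import structures.
From mathcomp Require Import all_boot all_order all_algebra.
From mathcomp Require Import all_classical all_reals all_analysis.

Set Implicit Arguments.
Unset Strict Implicit.
Unset Printing Implicit Defensive.

Import Order.TTheory GRing.Theory Num.Theory.
Local Open Scope classical_set_scope.
Local Open Scope ring_scope.

Fixpoint dwalk {T : Type} (e : T -> T -> Prop) (x : T) (p : seq T) : Prop :=
  if p is y :: p' then e x y /\ dwalk e y p' else True.

Definition anc_or_in {T : Type} (e : T -> T -> Prop) (C : set T) : set T :=
  fun x => exists p : seq T, dwalk e x p /\ C (last x p).

(* A path is given by a start node x0 and a sequence of steps (b, y):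
   step number i joins node i and node i+1 of  x0 :: map snd s,
   and b = true means the edge is  node_i -> node_(i+1),
   b = false means the edge is  node_(i+1) -> node_i. *)
Definition pnodes {T : eqType} (x0 : T) (s : seq (bool * T)) : seq T :=
  x0 :: map snd s.

Definition is_path {T : eqType} (e : T -> T -> Prop) (x0 : T)
    (s : seq (bool * T)) : Prop :=
  uniq (pnodes x0 s) /\
  forall i, (i < size s)%N ->
    if (nth (true, x0) s i).1
    then e (nth x0 (pnodes x0 s) i) (nth x0 (pnodes x0 s) i.+1)
    else e (nth x0 (pnodes x0 s) i.+1) (nth x0 (pnodes x0 s) i).

Definition collider_at {T : eqType} (x0 : T) (s : seq (bool * T)) (i : nat)
  : bool :=
  (nth (true, x0) s i.-1).1 && ~~ (nth (true, x0) s i).1.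

Definition blocked {T : eqType} (e_anc : T -> T -> Prop) (C : set T)
    (x0 : T) (s : seq (bool * T)) : Prop :=
  exists2 i, (0 < i < size s)%N &
    if collider_at x0 s i
    then ~ anc_or_in e_anc C (nth x0 (pnodes x0 s) i)
    else C (nth x0 (pnodes x0 s) i).

Definition sep_gen {T : eqType} (e_path e_anc : T -> T -> Prop)
    (A B C : set T) : Prop :=
  forall x0 s, is_path e_path x0 s ->
    (A x0 /\ B (last x0 (map snd s))) \/ (B x0 /\ A (last x0 (map snd s))) ->
    blocked e_anc C x0 s.

Definition dsep {T : eqType} (e : T -> T -> Prop) (A B C : set T) : Prop :=
  sep_gen e e A B C.

(* A tailed directed graph is given by two relations: arr i j  (i -> j) *)
(* and tail i j  (i •-> j).                                            *)

Definition tdg_minus {I : Type} (arr tail : I -> I -> Prop) : I -> I -> Prop :=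
  fun i j => arr i j \/ tail i j.

(* B is delta-separated from A given C in the tailed directed graph
   (arr, tail): paths taken in (D^-)^B, ancestors in D^- *)
Definition delta_sep {I : eqType} (arr tail : I -> I -> Prop)
    (A B C : set I) : Prop :=
  sep_gen (fun i j => tdg_minus arr tail i j /\ ~ B i)
          (tdg_minus arr tail) A B C.

(* Unrolled graphs of a time series.  Node nu_s^i is the pair (i, s).   *)

Definition ts_nodes {I : finType} (V W : {set I}) (t : nat) : set (I * nat) :=
  fun x => ((x.1 \in V) /\ (x.2 <= t)%N) \/ ((x.1 \in W) /\ x.2 = 0%N).

Definition rolled_tail {I : Type} (Dt : I * nat -> I * nat -> Prop)
  : I -> I -> Prop :=
  fun i j => exists u, Dt (i, u) (j, u).

Definition rolled_arr {I : Type} (Dt : I * nat -> I * nat -> Prop)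
  : I -> I -> Prop :=
  fun i j => (exists s u, (s <= u)%N /\ Dt (i, s) (j, u))
             /\ ~ rolled_tail Dt i j.

Definition past {I : Type} (i : I) (t : nat) : set (I * nat) :=
  fun x => x.1 = i /\ (x.2 <= t)%N.

(* Dt is a DAG on V^t \cup W^t with edges respecting time, whose only
   contemporaneous edges are nu_s^N -> nu_s^M and nu_s^N -> nu_s^C,
   and satisfying the standing assumption on contemporaneous edges. *)
Definition ts_DAG {I : finType} (V W : {set I}) (N M C : I) (t : nat)
    (Dt : I * nat -> I * nat -> Prop) : Prop :=
  [/\ (forall x y, Dt x y -> ts_nodes V W t x /\ ts_nodes V W t y),
      (forall x p, dwalk Dt x p -> p <> [::] -> last x p <> x),
      (forall i j s u, Dt (i, s) (j, u) -> (s <= u)%N),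
      (forall i j s, Dt (i, s) (j, s) -> i = N /\ (j = M \/ j = C)) &
      (forall i j u, Dt (i, u) (j, u) ->
         exists s r, (s < r)%N /\ Dt (i, s) (j, r))].

Definition cond_indep {d : measure_display} {Omega : measurableType d}
    {R : realType} (P : probability Omega R) (G1 G2 G3 : set (set Omega))
  : Prop :=
  forall E, <<s G1 >> E ->
    exists phi : Omega -> R,
      [/\ (forall B : set R, measurable B -> <<s G3 >> (phi @^-1` B)),
          (forall w, 0 <= phi w <= 1) &
          (forall F, <<s G2 `|` G3 >> F ->
             P (E `&` F) = (\int[P]_(w in F) (phi w)%:E)%E)].

Definition gen_events {d : measure_display} {Omega : measurableType d}
    {R : realType} {I : Type} (X : I -> nat -> Omega -> R)
    (a : set (I * nat)) : set (set Omega) :=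
  fun E => exists i s (B : set R),
      [/\ a (i, s), measurable B & E = X i s @^-1` B].

Definition CI {d : measure_display} {Omega : measurableType d}
    {R : realType} {I : Type} (P : probability Omega R)
    (X : I -> nat -> Omega -> R) (a b c : set (I * nat)) : Prop :=
  cond_indep P (gen_events X a) (gen_events X b) (gen_events X c).

Definition dsep_markov {d : measure_display} {Omega : measurableType d}
    {R : realType} {I : finType} (P : probability Omega R)
    (X : I -> nat -> Omega -> R) (V W : {set I}) (t : nat)
    (Dt : I * nat -> I * nat -> Prop) : Prop :=
  forall a b c : set (I * nat),
    a `<=` ts_nodes V W t -> b `<=` ts_nodes V W t -> c `<=` ts_nodes V W t ->
    a `&` b = set0 -> a `&` c = set0 -> b `&` c = set0 ->
    dsep Dt a b c -> CI P X a b c.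

(* Main.v *)
Require Import Defs.
From HB Require Import structures.
From mathcomp Require Import all_boot all_order all_algebra.
From mathcomp Require Import all_classical all_reals all_analysis.
From mathcomp Require Import zify.
From Stdlib Require Import Classical.
Local Open Scope classical_set_scope.

Fixpoint wf {T : Type} (G : T -> T -> Prop) (x : T) (s : seq (bool * T)) : Prop :=
  match s with
  | [::] => True
  | (b, y) :: s' => (if b then G x y else G y x) /\ wf G y s'
  end.

Definition stat {T : Type} (anC Cs : T -> Prop) (bin : option bool) (bo : bool) (x : T) : Prop :=
  match bin with
  | None => True
  | Some bi => if bi && ~~ bo then anC x else ~ Cs x
  end.

Fixpoint okw {T : Type} (anC Cs : T -> Prop) (bin : option bool) (x : T)
   (s : seq (bool * T)) : Prop :=
  match s with
  | [::] => True
  | (b, y) :: s' => stat anC Cs bin b x /\ okw anC Cs (Some b) y s'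
  end.

Lemma wf_idx (T : eqType) (e : T -> T -> Prop) x0 s :
  wf e x0 s <-> (forall i, (i < size s)%N ->
    if (nth (true, x0) s i).1
    then e (nth x0 (pnodes x0 s) i) (nth x0 (pnodes x0 s) i.+1)
    else e (nth x0 (pnodes x0 s) i.+1) (nth x0 (pnodes x0 s) i)).
Proof.
elim: s x0 => [|[b y] s IH] x0 /=; first by split.
rewrite /pnodes /=.
split.
- move=> [He Hw] [|i] Hi; first by [].
  have Hi' : (i < size s)%N by move: Hi => /=; lia.
  have := (proj1 (IH y) Hw i Hi'). rewrite /pnodes /=.
  rewrite (set_nth_default (true, y) (true, x0) Hi').
  have Hi1 : (i < size (y :: map snd s))%N by rewrite /= size_map; lia.
  have Hi2 : (i < size (map snd s))%N by rewrite size_map; lia.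
  by rewrite (set_nth_default y x0 Hi1) (set_nth_default y x0 Hi2).
- move=> H; split; first exact: (H 0%N).
  apply/IH => i Hi. have := H i.+1 Hi. rewrite /pnodes /=.
  rewrite (set_nth_default (true, y) (true, x0) Hi).
  have Hi1 : (i < size (y :: map snd s))%N by rewrite /= size_map; lia.
  have Hi2 : (i < size (map snd s))%N by rewrite size_map; lia.
  by rewrite (set_nth_default y x0 Hi1) (set_nth_default y x0 Hi2).
Qed.

Lemma okwS_idx (T : eqType) (anC Cs : T -> Prop) b0 x s :
  okw anC Cs (Some b0) x s <-> (forall i, (i < size s)%N ->
    stat anC Cs (Some (nth (true, x) ((b0, x) :: s) i).1) (nth (true, x) s i).1
      (nth x (x :: map snd s) i)).
Proof.
elim: s b0 x => [|[b y] s IH] b0 x /=; first by split.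
split.
- move=> [Hs Hw] [|i] /= Hi; first by [].
  have := (proj1 (IH b y) Hw i Hi).
  have Hi0 : (i < size ((b, y) :: s))%N by rewrite /=; lia.
  rewrite (set_nth_default (true, y) (true, x) Hi0).
  rewrite (set_nth_default (true, y) (true, x) Hi).
  have Hi1 : (i < size (y :: map snd s))%N by rewrite /= size_map; lia.
  by rewrite (set_nth_default y x Hi1).
- move=> H; split; first exact: (H 0%N).
  apply/IH => i Hi. have := H i.+1 Hi. rewrite /=.
  have Hi0 : (i < size ((b, y) :: s))%N by rewrite /=; lia.
  rewrite (set_nth_default (true, y) (true, x) Hi0).
  rewrite (set_nth_default (true, y) (true, x) Hi).
  have Hi1 : (i < size (y :: map snd s))%N by rewrite /= size_map; lia.
  by rewrite (set_nth_default y x Hi1).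
Qed.

Lemma okw_idx (T : eqType) (anC Cs : T -> Prop) x0 s :
  okw anC Cs None x0 s <-> (forall i, (0 < i < size s)%N ->
    if collider_at x0 s i then anC (nth x0 (pnodes x0 s) i)
    else ~ Cs (nth x0 (pnodes x0 s) i)).
Proof.
case: s => [|[b y] s] /=.
  by split => // _ i; lia.
rewrite okwS_idx /collider_at /pnodes /=.
split.
- move=> [_ H] [|i] //= Hi.
  have Hi' : (i < size s)%N by lia.
  have := H i Hi'.
  have Hi0 : (i < size ((b, y) :: s))%N by rewrite /=; lia.
  rewrite (set_nth_default (true, y) (true, x0) Hi0).
  rewrite (set_nth_default (true, y) (true, x0) Hi').
  have Hi1 : (i < size (y :: map snd s))%N by rewrite /= size_map; lia.
  by rewrite (set_nth_default y x0 Hi1).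
- move=> H; split => // i Hi.
  have := H i.+1 ltac:(lia). rewrite /=.
  have Hi0 : (i < size ((b, y) :: s))%N by rewrite /=; lia.
  rewrite (set_nth_default (true, y) (true, x0) Hi0).
  rewrite (set_nth_default (true, y) (true, x0) Hi).
  have Hi1 : (i < size (y :: map snd s))%N by rewrite /= size_map; lia.
  by rewrite (set_nth_default y x0 Hi1).
Qed.

Lemma okw_notblocked (T : eqType) (anc : T -> T -> Prop) (Cs : set T) x0 s :
  okw (anc_or_in anc Cs) Cs None x0 s <-> ~ blocked anc Cs x0 s.
Proof.
rewrite okw_idx /blocked; split.
- move=> H [i Hi Hb]; move: (H i Hi) Hb.
  by case: (collider_at x0 s i).
- move=> H i Hi.
  case Hc: (collider_at x0 s i).
  + apply: NNPP => Hn; apply: H; exists i => //; by rewrite Hc.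
  + move=> Hn; apply: H; exists i => //; by rewrite Hc.
Qed.

Lemma path_wf (T : eqType) (e : T -> T -> Prop) x0 s :
  is_path e x0 s <-> uniq (pnodes x0 s) /\ wf e x0 s.
Proof. by rewrite /is_path wf_idx. Qed.


Fixpoint revw {T : Type} (x : T) (s : seq (bool * T)) : seq (bool * T) :=
  match s with [::] => [::] | (b, y) :: s' => rcons (revw y s') (~~ b, x) end.

Fixpoint lastdir {T : Type} (bin : option bool) (s : seq (bool * T)) : option bool :=
  match s with [::] => bin | (b, _) :: s' => lastdir (Some b) s' end.

Lemma wf_rcons T G (x : T) s b y : wf G x (rcons s (b, y)) <->
  wf G x s /\ (if b then G (last x (map snd s)) y else G y (last x (map snd s))).
Proof. elim: s x => [|[b1 y1] s IH] x /=; first by tauto. rewrite IH; tauto. Qed.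

Lemma okw_rcons T anC Cs bin (x : T) s b y : okw anC Cs bin x (rcons s (b, y)) <->
  okw anC Cs bin x s /\ stat anC Cs (lastdir bin s) b (last x (map snd s)).
Proof. elim: s bin x => [|[b1 y1] s IH] bin x /=; first by tauto. rewrite IH; tauto. Qed.

Lemma lastdir_rcons T bin s b (y : T) : lastdir bin (rcons s (b, y)) = Some b.
Proof. by elim: s bin => [|[b1 y1] s IH] bin //=. Qed.

Lemma revw_last T (x : T) s : last (last x (map snd s)) (map snd (revw x s)) = x.
Proof. elim: s x => [|[b y] s IH] x //=. by rewrite map_rcons last_rcons. Qed.

Lemma wf_rev T G (x : T) s : wf G x s -> wf G (last x (map snd s)) (revw x s).
Proof.
elim: s x => [|[b y] s IH] x //= [He Hw].
apply/wf_rcons; split; first exact: IH.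
rewrite revw_last. by case: b He.
Qed.

Lemma okw_rev T anC Cs (x : T) s bin :
  okw anC Cs bin x s -> okw anC Cs None (last x (map snd s)) (revw x s).
Proof.
elim: s x bin => [|[b y] s IH] x bin //= [Hx Hw].
apply/okw_rcons; split; first exact: (IH y (Some b) Hw).
rewrite revw_last.
case: s Hw {IH} => [|[b' y'] s] //= [Hy _].
rewrite lastdir_rcons /stat. move: Hy; rewrite /stat. clear Hx. by case: b; case: b'.
Qed.

Lemma split_mem (T : eqType) (x : T) (s : seq (bool * T)) :
  x \in map snd s -> exists s1 (b : bool) s2, s = s1 ++ (b, x) :: s2.
Proof.
elim: s => [|[b y] s IH] //=. rewrite in_cons => /orP[/eqP ->|/IH [s1 [b2 [s2 ->]]]].
- by exists [::], b, s.
- by exists ((b, y) :: s1), b2, s2.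
Qed.

Lemma wf_cat T G (x : T) s1 s2 : wf G x (s1 ++ s2) -> wf G (last x (map snd s1)) s2.
Proof. elim: s1 x => [|[b y] s1 IH] x //= [_ H]; exact: IH. Qed.

Lemma okw_cat T anC Cs bin (x : T) s1 b y s2 :
  okw anC Cs bin x (s1 ++ (b, y) :: s2) -> okw anC Cs (Some b) y s2.
Proof.
elim: s1 bin x => [|[b1 y1] s1 IH] bin x /=; first by case.
by case => _ /IH.
Qed.

Lemma chain T (G : T -> T -> Prop) (anC Cs : T -> Prop)
  (Hcl : forall x y, G x y -> anC y -> anC x) :
  forall s (x : T) y bin, wf G x ((true, y) :: s) -> okw anC Cs bin x ((true, y) :: s) ->
  has (fun p => ~~ p.1) ((true, y) :: s) -> anC x.
Proof.
move=> s; elim: s => [|[b' y'] s IH] x y bin //= [Gxy Hw] [_ Hok] Hhas.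
apply: (Hcl _ _ Gxy).
move: Hw Hok Hhas; case: b' => /= Hw Hok Hhas.
- exact: (IH y y' (Some true)).
- by case: Hok.
Qed.

Lemma cut (T : eqType) (G : T -> T -> Prop) (anC Cs : T -> Prop)
  (Hcl : forall x y, G x y -> anC y -> anC x) (HC : forall x, Cs x -> anC x) :
  forall s (x : T) bin, wf G x s -> okw anC Cs bin x s -> ~~ uniq (x :: map snd s) ->
  exists s', [/\ wf G x s', okw anC Cs bin x s',
     last x (map snd s') = last x (map snd s) & (size s' < size s)%N].
Proof.
elim=> [|[b y] s IH] x bin Hw Hok //=.
rewrite negb_and negbK => /orP[Hin|Hu].
- have [s1 [b2 [s2 E]]] := @split_mem _ x ((b, y) :: s) Hin.
  exists s2; split.
  + have := @wf_cat _ G x s1 ((b2, x) :: s2).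
    rewrite -E => /(_ Hw) /= [] //.
  + have Ho2 := @okw_cat _ anC Cs bin x s1 b2 x s2.
    rewrite -E in Ho2; have {}Ho2 := Ho2 Hok.
    case: s2 E Ho2 => [|[b3 z] s3] E //= [Hs2 Hrest]; split => //.
    case: bin Hok => [bi|] //= Hok; have [Hx _] := Hok.
    move: Hx Hs2; rewrite /stat.
    case Hc: (bi && ~~ b3).
    * move/andP: Hc => [Hbi Hb3]; rewrite Hbi /=.
      case Hb: b => /=; last by [].
      move=> _ _.
      rewrite Hb in Hw E Hok.
      apply: (@chain _ G anC Cs Hcl s x y (Some bi)) => //.
      by rewrite E has_cat /= Hb3 /= !orbT.
    * move=> Hx Hs2 HCx.
      case: bi Hc Hx Hok => /= Hc Hx _.
      -- move: Hs2; rewrite (negbFE Hc) andbF; by apply.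
      -- by apply: Hx.
  + have := congr1 (fun l => last x (map snd l)) E. rewrite /= map_cat last_cat /= => ->. by [].
  + have := congr1 size E; rewrite size_cat /= => ->. lia.
- case: Hw => He Hw; case: Hok => Hx Hok.
  have [s' [W1 O1 L1 S1]] := IH y (Some b) Hw Hok Hu.
  exists ((b, y) :: s'); split => //=.
Qed.

Lemma mkuniq (T : eqType) (G : T -> T -> Prop) (anC Cs : T -> Prop)
  (Hcl : forall x y, G x y -> anC y -> anC x) (HC : forall x, Cs x -> anC x) :
  forall n s (x : T) bin, (size s < n)%N -> wf G x s -> okw anC Cs bin x s ->
  exists s', [/\ uniq (x :: map snd s'), wf G x s', okw anC Cs bin x s'
     & last x (map snd s') = last x (map snd s)].
Proof.
elim=> [|n IH] s x bin //= Hs Hw Hok.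
case Hu: (uniq (x :: map snd s)); first by exists s.
have [s' [W1 O1 L1 S1]] := @cut _ G anC Cs Hcl HC s x bin Hw Hok (negbT Hu).
have [s'' [U2 W2 O2 L2]] := IH s' x bin ltac:(lia) W1 O1.
exists s''; split => //. by rewrite L2.
Qed.

Fixpoint dto {T : Type} (G : T -> T -> Prop) (Cs Bs : T -> Prop) (x : T) (p : seq T) : Prop :=
  match p with [::] => Bs x | y :: p' => G x y /\ ~ Cs x /\ dto G Cs Bs y p' end.

Lemma dto_walk T G Cs Bs (anC : T -> Prop) : forall p (x : T) bi, dto G Cs Bs x p ->
  [/\ wf G x (map (fun z => (true, z)) p),
      okw anC Cs (Some bi) x (map (fun z => (true, z)) p)
    & Bs (last x (map snd (map (fun z => (true, z)) p)))].
Proof.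
elim=> [|y p IH] x bi //= [Gxy [HCx Hd]].
have [W O B] := IH y true Hd.
by split => //; split => //; rewrite /stat andbF.
Qed.

Lemma shortcut T G (Cs Bs anC : T -> Prop) : forall s (x : T) bin, wf G x s ->
  okw (fun z => anC z \/ exists p, dto G Cs Bs z p) Cs bin x s ->
  Bs (last x (map snd s)) ->
  exists s', [/\ wf G x s', okw anC Cs bin x s' & Bs (last x (map snd s'))].
Proof.
elim=> [|[b y] s IH] x bin /= Hw Hok HB; first by exists [::].
case: Hw => He Hw; case: Hok => Hx Hok.
have [s' [W1 O1 B1]] := IH y (Some b) Hw Hok HB.
case: (classic (stat anC Cs bin b x)) => Hs.
- by exists ((b, y) :: s').
- move: Hx Hs; rewrite /stat; case: bin => [bi|] //.
  case: (bi && ~~ b) => //; move=> [Ha|[p Hp]] Hs //.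
  have [W2 O2 B2] := @dto_walk _ G Cs Bs anC p x bi Hp.
  by exists (map (fun z => (true, z)) p).
Qed.


Fixpoint dwa {T : Type} (e : T -> T -> Prop) (P : T -> Prop) (x : T) (q : seq T) : Prop :=
  match q with [::] => P x | y :: q' => ~ P x /\ e x y /\ dwa e P y q' end.

Lemma first_hit T (e : T -> T -> Prop) (P : T -> Prop) :
  forall p x, dwalk e x p -> P (last x p) -> exists q, dwa e P x q.
Proof.
elim=> [|y p IH] x /=; first by move=> _ Px; exists [::].
move=> [Exy Hw] HP.
case: (classic (P x)) => Px; first by exists [::].
have [q Hq] := IH y Hw HP.
by exists (y :: q).
Qed.

Lemma anc_prepend T (e : T -> T -> Prop) (Cs : set T) x y :
  e x y -> anc_or_in e Cs y -> anc_or_in e Cs x.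
Proof. move=> Exy [p [Hw HC]]; by exists (y :: p). Qed.
Arguments anc_prepend {T e Cs x y}.


Lemma core (I : finType) (Dk : I * nat -> I * nat -> Prop) (Dm : I -> I -> Prop)
  (c : set (I * nat)) (Cs : set I) (Aa Bp : I) (k : nat)
  (Hedge : forall x y, Dk x y -> Dm x.1 y.1)
  (Htime : forall x y, Dk x y -> (x.2 <= y.2)%N)
  (HAB : Aa <> Bp)
  (HB : ~ c (Bp, k))
  (HE : forall x z, Dk x z -> ~ c x ->
     (anc_or_in Dk c z \/ (exists w, Dk z w) \/ z = (Aa, 0%N) \/ z = (Bp, k)) ->
     ~ Cs x.1 /\ x.1 <> Bp)
  (Hc1 : forall x, c x -> Cs x.1 \/ x.1 = Bp)
  (Hc2 : forall x y, Dk x y -> ~ c x -> (x.2 < k)%N -> ~ Cs x.1 /\ x.1 <> Bp)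
  (Hc3 : forall x, c x -> x.1 = Bp -> (x.2 < k)%N)
  (Hdelta : sep_gen (fun i j => Dm i j /\ ~ [set Bp] i) Dm [set Aa] [set Bp] Cs) :
  dsep Dk [set (Aa, 0%N)] [set (Bp, k)] c.
Proof.
pose G := fun i j => Dm i j /\ ~ [set Bp] i.
pose live := fun z => anc_or_in Dk c z \/ (exists w, Dk z w) \/ z = (Aa, 0%N) \/ z = (Bp, k).
pose anC' := fun j => anc_or_in Dm Cs j \/ exists p, dto G Cs [set Bp] j p.
have Hcol : forall x, anc_or_in Dk c x -> anC' x.1.
  move=> x [p [Hw Hl]].
  have [q Hq] := @first_hit _ Dk c p x Hw Hl.
  suff : forall q x, dwa Dk c x q ->
     anc_or_in Dm Cs x.1 \/ ((x.2 < k)%N /\ exists p, dto G Cs [set Bp] x.1 p).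
    move/(_ q x Hq) => [H|[_ H]]; [by left | by right].
  elim=> [|y q' IH] x' /=.
  - move=> cx. case: (Hc1 _ cx) => H.
    + left; by exists [::].
    + right; split; first exact: Hc3.
      by exists [::].
  - move=> [ncx [Exy Hd]].
    case: (IH y Hd) => [H|[Hy [p' Hp']]].
    + left; exact: (anc_prepend (Hedge _ _ Exy) H).
    + have Hx2 : (x'.2 < k)%N by have := Htime _ _ Exy; lia.
      have [H1 H2] := Hc2 _ _ Exy ncx Hx2.
      right; split => //; exists (y.1 :: p').
      split; [split; [exact: Hedge | exact: H2] | split => //].
have live_here : forall s x bin, wf Dk x s -> okw (anc_or_in Dk c) c bin x s ->
    (bin = None -> x = (Aa, 0%N)) -> (s = [::] -> x = (Bp, k)) ->
    (bin = Some false -> exists w, Dk x w /\ live w) -> live x.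
  move=> [|[b y] s] x bin Hw Hok Hst Hen Hinv.
  - by right; right; right; apply: Hen.
  - case: bin Hst Hok Hinv => [bi|] Hst Hok Hinv; last by right; right; left; apply: Hst.
    case: Hok => Hx _; move: Hx; rewrite /stat.
    case Hc: (bi && ~~ b) => Hx; first by left.
    case: bi Hc Hst Hinv Hx => Hc Hst Hinv Hx.
    + move: Hc Hw => /= /negbT; rewrite negbK => -> [He _].
      by right; left; exists y.
    + have [w [Hw' _]] := Hinv erefl.
      by right; left; exists w.
have proj : forall s x bin, wf Dk x s -> okw (anc_or_in Dk c) c bin x s ->
    (bin = None -> x = (Aa, 0%N)) -> last x (map snd s) = (Bp, k) ->
    (bin = Some false -> exists w, Dk x w /\ live w) ->
    wf G x.1 (map (fun p => (p.1, p.2.1)) s) /\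
    okw anC' Cs bin x.1 (map (fun p => (p.1, p.2.1)) s).
  elim=> [|[b y] s IH] x bin Hw Hok Hst Hlast Hinv /=; first by [].
  have Hlx : live x by apply: (live_here ((b, y) :: s) x bin).
  have Hinvy : Some b = Some false -> exists w, Dk y w /\ live w.
    case=> Eb; move: Hw; rewrite Eb /= => -[He _]; by exists x.
  case: Hw => He Hw; case: Hok => Hx Hok.
  have Hly : live y.
    apply: (live_here s y (Some b)) => //.
    by move=> Es; move: Hlast; rewrite Es.
  have [IHw IHo] := IH y (Some b) Hw Hok (fun H => ltac:(discriminate)) Hlast Hinvy.
  split; split => //.
  - case: b He Hinvy Hx Hok IHw IHo Hinv Hlast Hlx => He Hinvy Hx Hok IHw IHo Hinv Hlast Hlx.
    + split; first exact: Hedge.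
      case: bin Hst Hx Hinv => [bi|] Hst Hx Hinv.
      * move: Hx; rewrite /stat andbF => Hx.
        exact: (HE _ _ He Hx Hly).2.
      * by rewrite (Hst erefl) /=.
    + split; first exact: Hedge.
      have ncy : ~ c y.
        case: s Hlast Hok {IH IHw IHo Hw Hly} => [|[b' y'] s] /= Hlast Hok.
        * by rewrite Hlast.
        * by case: Hok.
      exact: (HE _ _ He ncy Hlx).2.
  - case: bin Hst Hx Hinv => [bi|] Hst Hx Hinv //.
    move: Hx; rewrite /stat.
    case Hc: (bi && ~~ b) => Hx; first exact: Hcol.
    have [w [Hxw Hlw]] : exists w, Dk x w /\ live w.
      move: He Hc; case Eb: b => He Hc; first by exists y.
      apply: Hinv; case: bi Hc {Hst} => //.
    exact: (HE _ _ Hxw Hx Hlw).1.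
move=> x0 s /path_wf [Hu Hw] Hends.
apply: NNPP => /okw_notblocked Hok.
have [x1 [s1 [W1 O1 E1 L1]]] : exists x1 s1, [/\ wf Dk x1 s1,
    okw (anc_or_in Dk c) c None x1 s1, x1 = (Aa, 0%N) & last x1 (map snd s1) = (Bp, k)].
  case: Hends => [[Ha Hb]|[Hb Ha]].
  - by exists x0, s.
  - exists (last x0 (map snd s)), (revw x0 s); split.
    + exact: wf_rev.
    + exact: (@okw_rev _ _ _ x0 s None Hok).
    + exact: Ha.
    + by rewrite revw_last.
have [PW PO] := proj s1 x1 None W1 O1 (fun _ => E1) L1 (fun H => ltac:(discriminate)).
have PL : [set Bp] (last x1.1 (map snd (map (fun p => (p.1, p.2.1)) s1))).
  rewrite -map_comp.
  have -> : [seq (snd \o (fun p : bool * (I * nat) => (p.1, p.2.1))) i | i <- s1]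
      = map fst (map snd s1) by rewrite -map_comp.
  by rewrite last_map L1.
rewrite E1 /= in PW PO PL.
have [s2 [W2 O2 B2]] := @shortcut _ G Cs [set Bp] (anc_or_in Dm Cs) _ Aa None PW PO PL.
have Hcl : forall x y, G x y -> anc_or_in Dm Cs y -> anc_or_in Dm Cs x.
  move=> x y [Gxy _]; exact: anc_prepend.
have HC : forall x, Cs x -> anc_or_in Dm Cs x by move=> x Hx; exists [::].
have [s3 [U3 W3 O3 L3]] := @mkuniq _ G _ Cs Hcl HC _ s2 Aa None (ltnSn (size s2)) W2 O2.
have := Hdelta Aa s3.
have Hp : is_path (fun i j => Dm i j /\ ~ [set Bp] i) Aa s3 by apply/path_wf.
move/(_ Hp).
have Hen : ([set Aa] Aa /\ [set Bp] (last Aa (map snd s3))) \/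
           ([set Bp] Aa /\ [set Aa] (last Aa (map snd s3))).
  left; split => //; by rewrite L3.
move/(_ Hen).
by apply/okw_notblocked.
Qed.


Lemma mid (I : finType) (V W : {set I}) (N M C Ab Aa Bp : I) (Cs : set I)
  (k bM bC bN : nat) (Dk : I * nat -> I * nat -> Prop) (Dm : I -> I -> Prop) :
  (forall i, i \in V -> i \notin W) ->
  N \in V -> M \in V -> C \in V -> Ab \in W -> Aa \in W ->
  N != M -> N != C -> M != C ->
  ts_DAG V W N M C k Dk -> (1 <= k)%N ->
  (k.-1 <= bM <= k)%N -> (k.-1 <= bC <= k)%N -> (k.-1 <= bN <= k)%N ->
  (bN = k.-1 -> [/\ bM = k.-1, bC = k.-1 & Bp = N]) ->
  (forall j, Cs j \/ j = Bp <-> j = Ab \/ j = M \/ j = C \/ j = N) ->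
  ((Bp = M /\ bM = k.-1) \/ (Bp = C /\ bC = k.-1) \/ (Bp = N /\ bN = k.-1)) ->
  (forall x y, Dk x y -> Dm x.1 y.1) ->
  sep_gen (fun i j => Dm i j /\ ~ [set Bp] i) Dm [set Aa] [set Bp] Cs ->
  dsep Dk [set (Aa, 0%N)] [set (Bp, k)]
    ([set (Ab, 0%N)] `|` past M bM `|` past C bC `|` past N bN).
Proof.
move=> HVW HN HM HC HAb HAa /eqP nNM /eqP nNC /eqP nMC [Hts Hacy Htime Hcont _] Hk
  /andP[bM1 bM2] /andP[bC1 bC2] /andP[bN1 bN2] HbN HCs HBp Hedge Hdelta.
set c := (X in dsep _ _ _ X).
have cE : forall x, c x <-> x = (Ab, 0%N) \/ (x.1 = M /\ (x.2 <= bM)%N) \/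
    (x.1 = C /\ (x.2 <= bC)%N) \/ (x.1 = N /\ (x.2 <= bN)%N).
  move=> x; rewrite /c /setU /set1 /past /=; tauto.
have WnV : forall j, j \in W -> j \notin V.
  move=> j Hj; apply/negP => Hv; by move: (HVW j Hv); rewrite Hj.
have nAbM : Ab <> M by move=> E; move: (WnV _ HAb); rewrite E HM.
have nAbC : Ab <> C by move=> E; move: (WnV _ HAb); rewrite E HC.
have nAbN : Ab <> N by move=> E; move: (WnV _ HAb); rewrite E HN.
have nAaM : Aa <> M by move=> E; move: (WnV _ HAa); rewrite E HM.
have nAaC : Aa <> C by move=> E; move: (WnV _ HAa); rewrite E HC.
have nAaN : Aa <> N by move=> E; move: (WnV _ HAa); rewrite E HN.
have tsW : forall j u, j \in W -> ts_nodes V W k (j, u) -> u = 0%N.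
  move=> j u Hj [[/= Hv _]|[_ /= ->]] //. by move: (HVW _ Hv); rewrite Hj.
have tsV : forall x, ts_nodes V W k x -> (x.2 <= k)%N.
  move=> x [[_ H]|[_ ->]] //.
have out_k : forall j w, Dk (j, k) w -> [/\ j = N, w.2 = k & (w.1 = M \/ w.1 = C)].
  move=> j [j' u'] Hd.
  have Ht := Htime _ _ _ _ Hd.
  have [_ [[_ Hu']|[_ Hu']]] := Hts _ _ Hd; last by move: Ht Hu' => /=; lia.
  have Eu : u' = k by move: Hu' => /=; lia.
  subst u'. have [-> H] := Hcont _ _ _ Hd. by split.
have inS : forall j, Cs j \/ j = Bp -> j = Ab \/ j = M \/ j = C \/ j = N.
  by move=> j /HCs.
have hBp : forall u, ((Bp = M /\ (u <= bM)%N) \/ (Bp = C /\ (u <= bC)%N) \/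
      (Bp = N /\ (u <= bN)%N)) -> (u < k)%N.
  move=> u H.
  destruct HBp as [[E1 E2]|[[E1 E2]|[E1 E2]]]; subst Bp;
  destruct H as [[E3 E4]|[[E3 E4]|[E3 E4]]];
  (try by exfalso; congruence); lia.
have BpV : Bp = M \/ Bp = C \/ Bp = N by case: HBp => [[->]|[[->]|[->]]]; tauto.
apply: (@core I Dk Dm c Cs Aa Bp k Hedge (fun x y H => ltac:(case: x y H => [i s] [j u] H; exact: (Htime _ _ _ _ H)))).
- move=> E. subst Aa. by case: BpV => [E|[E|E]]; [apply: nAaM|apply: nAaC|apply: nAaN].
- move/cE => [E|[[/= E1 E2]|[[/= E1 E2]|[/= E1 E2]]]].
  + case: E => E _. by case: BpV => [E'|[E'|E']]; rewrite E' in E; [apply: nAbM|apply: nAbC|apply: nAbN].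
  + have := hBp k (or_introl (conj E1 E2)); lia.
  + have := hBp k (or_intror (or_introl (conj E1 E2))); lia.
  + have := hBp k (or_intror (or_intror (conj E1 E2))); lia.
-
  move=> [j u] z Hd ncx Hlive /=.
  suff : ~ (j = Ab \/ j = M \/ j = C \/ j = N).
    by move=> H; split => [Hc|Hb]; apply: H; apply: inS; [left|right].
  have [Hx Hz] := Hts _ _ Hd.
  move=> Hj.
  have Hj' : j = M \/ j = C \/ j = N.
    case: Hj => [Ej|]; last by [].
    subst j. have Eu := tsW _ _ HAb Hx. subst u. exfalso; apply: ncx; apply/cE; by left.
  have Hu : u = k.
    have := tsV _ Hx => /= Hk'.
    case: Hj' => [Ej|[Ej|Ej]]; subst j.
    + have : ~ (u <= bM)%N by move=> H; apply: ncx; apply/cE; right; left.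
      lia.
    + have : ~ (u <= bC)%N by move=> H; apply: ncx; apply/cE; right; right; left.
      lia.
    + have : ~ (u <= bN)%N by move=> H; apply: ncx; apply/cE; right; right; right.
      lia.
  subst u.
  have [EjN Ez2 Ez1] := out_k _ _ Hd. subst j.
  have HbN' : bN = k.-1.
    have : ~ (k <= bN)%N by move=> H; apply: ncx; apply/cE; right; right; right.
    lia.
  have [EbM EbC EBp] := HbN HbN'.
  have nz : ~ (exists w, Dk z w).
    move=> [w Hw].
    have Ez : z = (z.1, k) by move: Ez2; case: z {Hd Hlive Ez1 Hw Hz} => ? ? /= ->.
    rewrite Ez in Hw. have [E _ _] := out_k _ _ Hw.
    by case: Ez1 => E1; [apply: nNM|apply: nNC]; rewrite -E -E1.
  case: Hlive => [[p [Hw Hl]]|[H|[E|E]]].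
  + case: p Hw Hl => [|w p] /= Hw Hl; last by apply: nz; exists w; case: Hw.
    case/cE: Hl => [E|[[E1 E2]|[[E1 E2]|[E1 E2]]]].
    * by move: Ez2; rewrite E /=; lia.
    * rewrite Ez2 in E2. lia.
    * rewrite Ez2 in E2. lia.
    * by case: Ez1 => E; rewrite E in E1; [apply: nNM|apply: nNC].
  + exact: nz.
  + by move: Ez2; rewrite E /=; lia.
  + move: Ez1; rewrite E /= EBp. by case=> E'; [apply: nNM|apply: nNC].
-
  move=> x /cE [E|[[E1 _]|[[E1 _]|[E1 _]]]]; apply/HCs.
  + by rewrite E; left.
  + by right; left.
  + by right; right; left.
  + by right; right; right.
-
  move=> [j u] y Hd ncx /= Hu.
  suff : ~ (j = Ab \/ j = M \/ j = C \/ j = N).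
    by move=> H; split => [Hc|Hb]; apply: H; apply: inS; [left|right].
  have [Hx _] := Hts _ _ Hd.
  case=> [Ej|[Ej|[Ej|Ej]]]; subst j.
  + have Eu := tsW _ _ HAb Hx. subst u. by apply: ncx; apply/cE; left.
  + apply: ncx; apply/cE; right; left; split => //=; lia.
  + apply: ncx; apply/cE; right; right; left; split => //=; lia.
  + apply: ncx; apply/cE; right; right; right; split => //=; lia.
-
  move=> x /cE [E|[[E1 E2]|[[E1 E2]|[E1 E2]]]] EB.
  + rewrite E /= in EB. exfalso; by case: BpV => [E'|[E'|E']]; rewrite E' in EB; [apply: nAbM|apply: nAbC|apply: nAbN].
  + apply: hBp; left; split => //; congruence.
  + apply: hBp; right; left; split => //; congruence.
  + apply: hBp; right; right; split => //; congruence.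
- exact: Hdelta.
Qed.


Lemma disj_help (T : Type) (A B : set T) : (forall x, A x -> B x -> False) -> A `&` B = set0.
Proof. move=> H; rewrite -subset0 => x [Ha Hb]; exact: H Ha Hb. Qed.

Lemma past_sub (I : finType) (V W : {set I}) (j : I) u k :
  j \in V -> (u <= k)%N -> past j u `<=` ts_nodes V W k.
Proof. move=> Hj Hu [j' u'] [/= -> Hu']; left; split => //=; lia. Qed.

Lemma ptV_sub (I : finType) (V W : {set I}) (j : I) u k :
  j \in V -> (u <= k)%N -> [set (j, u)] `<=` ts_nodes V W k.
Proof. move=> Hj Hu x ->; left; split => //=. Qed.

Lemma ptW_sub (I : finType) (V W : {set I}) (j : I) k :
  j \in W -> [set (j, 0%N)] `<=` ts_nodes V W k.
Proof. move=> Hj x ->; right; split => //=. Qed.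

Lemma subU (T : Type) (A B D : set T) : A `<=` D -> B `<=` D -> A `|` B `<=` D.
Proof. by move=> H1 H2 x [Ha|Hb]; [apply: H1|apply: H2]. Qed.

Ltac disj_tac :=
  apply: disj_help => -[j u]; rewrite /setU /set1 /past /=; move=> Ha Hb;
  repeat match goal with
  | H : _ \/ _ |- _ => destruct H
  | H : _ /\ _ |- _ => destruct H
  | H : (_, _) = (_, _) |- _ => inversion H; clear H
  end; subst; (try congruence); lia.

Local Open Scope ring_scope.

Theorem proposition2 (R : realType) (d : measure_display)
  (Omega : measurableType d) (P : probability Omega R)
  (I : finType) (V W : {set I}) (X : I -> nat -> Omega -> R)
  (N M C AD AM : I) (Dt : nat -> I * nat -> I * nat -> Prop) :
  (forall i, i \in V -> i \notin W) ->
  N \in V -> M \in V -> C \in V -> AD \in W -> AM \in W ->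
  N != M -> N != C -> M != C -> AD != AM ->
  (forall i s, ts_nodes V W s (i, s) -> measurable_fun setT (X i s)) ->
  (forall t, (1 <= t)%N -> ts_DAG V W N M C t (Dt t)) ->
  (forall t, (1 <= t)%N -> dsep_markov P X V W t (Dt t)) ->
  let arr := fun i j => exists2 t, (1 <= t)%N & rolled_arr (Dt t) i j in
  let tail := fun i j => exists2 t, (1 <= t)%N & rolled_tail (Dt t) i j in
  forall k, (1 <= k)%N ->
  [/\ delta_sep arr tail [set AD] [set M] ([set AM] `|` [set C] `|` [set N]) ->
        CI P X [set (AD, 0%N)] [set (M, k)]
          ([set (AM, 0%N)] `|` past M k.-1 `|` past C k.-1 `|` past N k),
      delta_sep arr tail [set AM] [set C] ([set AD] `|` [set M] `|` [set N]) ->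
        CI P X [set (AM, 0%N)] [set (C, k)]
          ([set (AD, 0%N)] `|` past M k `|` past C k.-1 `|` past N k) &
      delta_sep arr tail [set AM] [set N] ([set AD] `|` [set C] `|` [set M]) ->
        CI P X [set (AM, 0%N)] [set (N, k)]
          ([set (AD, 0%N)] `|` past M k.-1 `|` past C k.-1 `|` past N k.-1)].
Proof.
move=> HVW HN HM HC HAD HAM nNM nNC nMC nAA Hmeas HDAG Hmark arr tail k Hk.
have Hedge : forall x y, Dt k x y -> tdg_minus arr tail x.1 y.1.
  move=> [i s] [j u] H /=.
  case: (classic (rolled_tail (Dt k) i j)) => Ht.
  - right; by exists k.
  - left; exists k => //; split => //; exists s, u; split => //.
    have [_ _ Htime _ _] := HDAG k Hk. exact: (Htime _ _ _ _ H).
have WnV : forall j, j \in W -> j \notin V.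
  move=> j Hj; apply/negP => Hv; by move: (HVW j Hv); rewrite Hj.
have nADM : AD <> M by move=> E; move: (WnV _ HAD); rewrite E HM.
have nADC : AD <> C by move=> E; move: (WnV _ HAD); rewrite E HC.
have nADN : AD <> N by move=> E; move: (WnV _ HAD); rewrite E HN.
have nAMM : AM <> M by move=> E; move: (WnV _ HAM); rewrite E HM.
have nAMC : AM <> C by move=> E; move: (WnV _ HAM); rewrite E HC.
have nAMN : AM <> N by move=> E; move: (WnV _ HAM); rewrite E HN.
have nAA' : AD <> AM by apply/eqP.
have nNM' : N <> M by apply/eqP.
have nNC' : N <> C by apply/eqP.
have nMC' : M <> C by apply/eqP.
have Hk1 : (k.-1 <= k)%N by lia.
split => Hd.
- apply: (Hmark k Hk).
  + exact: ptW_sub.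
  + exact: ptV_sub.
  + apply: subU; [apply: subU; [apply: subU|]|].
    * exact: ptW_sub.
    * exact: past_sub.
    * exact: past_sub.
    * exact: past_sub.
  + disj_tac.
  + disj_tac.
  + disj_tac.
  + apply: (@mid I V W N M C AM AD M ([set AM] `|` [set C] `|` [set N]) k k.-1 k.-1 k
      (Dt k) (tdg_minus arr tail) HVW HN HM HC HAM HAD nNM nNC nMC (HDAG k Hk) Hk) => //.
    * apply/andP; split => //.
    * apply/andP; split => //.
    * apply/andP; split => //.
    * move=> E; exfalso; lia.
    * move=> j; rewrite /setU /set1 /=; tauto.
    * by left.
- apply: (Hmark k Hk).
  + exact: ptW_sub.
  + exact: ptV_sub.
  + apply: subU; [apply: subU; [apply: subU|]|].
    * exact: ptW_sub.
    * exact: past_sub.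
    * exact: past_sub.
    * exact: past_sub.
  + disj_tac.
  + disj_tac.
  + disj_tac.
  + apply: (@mid I V W N M C AD AM C ([set AD] `|` [set M] `|` [set N]) k k k.-1 k
      (Dt k) (tdg_minus arr tail) HVW HN HM HC HAD HAM nNM nNC nMC (HDAG k Hk) Hk) => //.
    * apply/andP; split => //.
    * apply/andP; split => //.
    * apply/andP; split => //.
    * move=> E; exfalso; lia.
    * move=> j; rewrite /setU /set1 /=; tauto.
    * by right; left.
- apply: (Hmark k Hk).
  + exact: ptW_sub.
  + exact: ptV_sub.
  + apply: subU; [apply: subU; [apply: subU|]|].
    * exact: ptW_sub.
    * exact: past_sub.
    * exact: past_sub.
    * exact: past_sub.
  + disj_tac.
  + disj_tac.
  + disj_tac.
  + apply: (@mid I V W N M C AD AM N ([set AD] `|` [set C] `|` [set M]) k k.-1 k.-1 k.-1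
      (Dt k) (tdg_minus arr tail) HVW HN HM HC HAD HAM nNM nNC nMC (HDAG k Hk) Hk) => //.
    * apply/andP; split => //.
    * apply/andP; split => //.
    * apply/andP; split => //.
    * move=> j; rewrite /setU /set1 /=; tauto.
    * by right; right.
Qed.
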